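(* The $5$-dimensional real unimodular Lie algebra $\mathfrak{sl}(2,\mathbb R)\ltimes\mathbb R^2$ possesses an inner product with a geodesic basis.
   Context: $\mathfrak{sl}(2,\mathbb R)\ltimes\mathbb R^2$ is the semidirect product in which $\mathfrak{sl}(2,\mathbb R)$ acts on the abelian ideal $\mathbb R^2$ by its canonical linear action; equivalently it has basis $\{X_1,\dots,X_5\}$ with nonzero brackets $[X_1,X_2]=2X_2$, $[X_1,X_3]=-2X_3$, $[X_1,X_4]=X_4$, $[X_1,X_5]=-X_5$, $[X_2,X_3]=X_1$, $[X_3,X_4]=X_5$, $[X_2,X_5]=X_4$. For an inner product $\langle\cdot,\cdot\rangle$ on a real Lie algebra $\mathfrak g$, a nonzero $X\in\mathfrak g$ is a geodesic element if $\langle X,[X,Y]\rangle=0$ for all $Y\in\mathfrak g$; a geodesic basis is a basis consisting of geodesic elements. *)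

(* Defs.v *)
From HB Require Import structures.
From mathcomp Require Import all_boot all_order all_algebra.
From mathcomp Require Import reals.
Set Implicit Arguments. Unset Strict Implicit. Unset Printing Implicit Defensive.
Import Order.TTheory GRing.Theory Num.Theory.
Local Open Scope ring_scope.

(* The Lie algebra sl(2,R) ⋉ R^2 is modelled on row vectors 'rV[R]_5,
   coordinates w.r.t. the basis X1,...,X5 (X_k is index k-1). *)

Definition ebas (R : realType) (k : nat) : 'rV[R]_5 := delta_mx 0 (inord k).

(* [X_{i+1}, X_{j+1}] from the structure constants of the paper. *)
Definition br_basis (R : realType) (i j : 'I_5) : 'rV[R]_5 :=
  match val i, val j with
  | 0, 1 => 2 *: ebas R 1 | 1, 0 => - (2 *: ebas R 1)
  | 0, 2 => - (2 *: ebas R 2) | 2, 0 => 2 *: ebas R 2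
  | 0, 3 => ebas R 3 | 3, 0 => - ebas R 3
  | 0, 4 => - ebas R 4 | 4, 0 => ebas R 4
  | 1, 2 => ebas R 0 | 2, 1 => - ebas R 0
  | 2, 3 => ebas R 4 | 3, 2 => - ebas R 4
  | 1, 4 => ebas R 3 | 4, 1 => - ebas R 3
  | _, _ => 0
  end.

Definition lie_br (R : realType) (x y : 'rV[R]_5) : 'rV[R]_5 :=
  \sum_(i < 5) \sum_(j < 5) (x 0 i * y 0 j) *: br_basis R i j.

Definition form (R : realType) (S : 'M[R]_5) (x y : 'rV[R]_5) : R :=
  (x *m S *m y^T) 0 0.

Definition is_inner_product (R : realType) (S : 'M[R]_5) : Prop :=
  S^T = S /\ (forall x : 'rV[R]_5, x != 0 -> 0 < form S x x).

Definition geodesic_element (R : realType) (S : 'M[R]_5) (X : 'rV[R]_5) : Prop :=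
  X != 0 /\ (forall Y : 'rV[R]_5, form S X (lie_br X Y) = 0).

Definition geodesic_basis (R : realType) (S : 'M[R]_5) (B : 'M[R]_5) : Prop :=
  row_free B /\ (forall i : 'I_5, geodesic_element S (row i B)).

(* Main.v *)
Require Import Defs.
From mathcomp Require Import all_boot all_order all_algebra.
From mathcomp Require Import reals ring lra.
Import Order.TTheory GRing.Theory Num.Theory.
Local Open Scope ring_scope.

Definition o0 : 'I_5 := @Ordinal 5 0 isT.
Definition o1 : 'I_5 := @Ordinal 5 1 isT.
Definition o2 : 'I_5 := @Ordinal 5 2 isT.
Definition o3 : 'I_5 := @Ordinal 5 3 isT.
Definition o4 : 'I_5 := @Ordinal 5 4 isT.

Lemma L0 : ord0 = o0. Proof. exact: val_inj. Qed.
Lemma L1 : lift (ord0 : 'I_5) (ord0 : 'I_4) = o1. Proof. exact: val_inj. Qed.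
Lemma L2 : lift (ord0 : 'I_5) (lift (ord0 : 'I_4) (ord0 : 'I_3)) = o2. Proof. exact: val_inj. Qed.
Lemma L3 : lift (ord0 : 'I_5) (lift (ord0 : 'I_4) (lift (ord0 : 'I_3) (ord0 : 'I_2))) = o3. Proof. exact: val_inj. Qed.
Lemma L4 : lift (ord0 : 'I_5) (lift (ord0 : 'I_4) (lift (ord0 : 'I_3) (lift (ord0 : 'I_2) (ord0 : 'I_1)))) = o4. Proof. exact: val_inj. Qed.

Lemma eq_inord5 (j : 'I_5) k : (k < 5)%N -> (j == inord k) = (val j == k).
Proof. by move=> hk; rewrite -val_eqE /= inordK. Qed.

Lemma lie_coord (R : realType) (x y : 'rV[R]_5) :
  lie_br x y =
  \row_k (match val k with
   | 0 => x 0 o1 * y 0 o2 - x 0 o2 * y 0 o1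
   | 1 => 2 * (x 0 o0 * y 0 o1 - x 0 o1 * y 0 o0)
   | 2 => - (2 * (x 0 o0 * y 0 o2 - x 0 o2 * y 0 o0))
   | 3 => x 0 o0 * y 0 o3 - x 0 o3 * y 0 o0 + x 0 o1 * y 0 o4 - x 0 o4 * y 0 o1
   | _ => - (x 0 o0 * y 0 o4 - x 0 o4 * y 0 o0) + x 0 o2 * y 0 o3 - x 0 o3 * y 0 o2
   end).
Proof.
apply/rowP => k; rewrite mxE /lie_br summxE.
rewrite !big_ord_recl !big_ord0 ?L4 ?L3 ?L2 ?L1 ?L0.
rewrite ?L4 ?L3 ?L2 ?L1 ?L0.
rewrite /br_basis /ebas /=.
case: k => [[|[|[|[|[|?]]]]] Hk] //=;
rewrite !mxE /= ?eq_inord5 //=; ring.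
Qed.

Definition Sf (R : realType) (i j : nat) : R :=
  if i == j then (if (i < 3)%N then 1 else 2) else 0.
Definition Smat (R : realType) : 'M[R]_5 := \matrix_(i, j) Sf R i j.
Definition Bf (R : realType) (i j : nat) : R :=
  match i, j with
  | 0, 0 => 1
  | 1, 1 => 1 | 1, 2 => 1
  | 2, 1 => 1 | 2, 2 => -1
  | 3, 1 => 1 | 3, 4 => 1
  | 4, 2 => 1 | 4, 3 => 1
  | _, _ => 0 end.
Definition Bmat (R : realType) : 'M[R]_5 := \matrix_(i, j) Bf R i j.

Lemma form_S (R : realType) (x y : 'rV[R]_5) :
  Defs.form (Smat R) x y = x 0 o0 * y 0 o0 + x 0 o1 * y 0 o1 + x 0 o2 * y 0 o2
    + 2 * (x 0 o3 * y 0 o3) + 2 * (x 0 o4 * y 0 o4).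
Proof.
rewrite /Defs.form !mxE !big_ord_recl !big_ord0 ?L4 ?L3 ?L2 ?L1 ?L0.
rewrite !mxE !big_ord_recl !big_ord0 ?L4 ?L3 ?L2 ?L1 ?L0 /Smat !mxE /Sf /=; ring.
Qed.

Lemma geo (R : realType) (i : 'I_5) : geodesic_element (Smat R) (row i (Bmat R)).
Proof.
split.
  apply/negP => /eqP/rowP H.
  case: i H => [[|[|[|[|[|?]]]]] Hi] H //.
  - by move: (H ord0); rewrite !mxE /= => /eqP; rewrite oner_eq0.
  - by move: (H (inord 1)); rewrite !mxE inordK //= => /eqP; rewrite oner_eq0.
  - by move: (H (inord 1)); rewrite !mxE inordK //= => /eqP; rewrite oner_eq0.
  - by move: (H (inord 1)); rewrite !mxE inordK //= => /eqP; rewrite oner_eq0.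
  - by move: (H (inord 2)); rewrite !mxE inordK //= => /eqP; rewrite oner_eq0.
move=> Y; rewrite form_S lie_coord.
case: i => [[|[|[|[|[|?]]]]] Hi] //; rewrite !mxE /= /Bf /=; ring.
Qed.

Lemma pd (R : realType) (x : 'rV[R]_5) : x != 0 -> 0 < Defs.form (Smat R) x x.
Proof.
move=> nx; rewrite form_S ltNge; apply/negP => hle; move/eqP: nx; apply.
have sq : forall a : R, 0 <= a * a by move=> a; rewrite -expr2 sqr_ge0.
have z : forall a : R, a * a = 0 -> a = 0 by move=> a /eqP; rewrite mulf_eq0 orbb => /eqP.
have s0 := sq (x 0 o0); have s1 := sq (x 0 o1); have s2 := sq (x 0 o2).
have s3 := sq (x 0 o3); have s4 := sq (x 0 o4).
have e0 : x 0 o0 = 0 by apply: z; lra.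
have e1 : x 0 o1 = 0 by apply: z; lra.
have e2 : x 0 o2 = 0 by apply: z; lra.
have e3 : x 0 o3 = 0 by apply: z; lra.
have e4 : x 0 o4 = 0 by apply: z; lra.
apply/rowP => k; rewrite mxE.
case: k => [[|[|[|[|[|?]]]]] Hk] //.
- by rewrite -e0; congr (x 0 _); apply: val_inj.
- by rewrite -e1; congr (x 0 _); apply: val_inj.
- by rewrite -e2; congr (x 0 _); apply: val_inj.
- by rewrite -e3; congr (x 0 _); apply: val_inj.
- by rewrite -e4; congr (x 0 _); apply: val_inj.
Qed.

Definition Cf (R : realType) (i j : nat) : R :=
  match i, j with
  | 0, 0 => 1
  | 1, 1 => 2^-1 | 1, 2 => 2^-1
  | 2, 1 => 2^-1 | 2, 2 => - 2^-1
  | 3, 1 => - 2^-1 | 3, 2 => 2^-1 | 3, 4 => 1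
  | 4, 1 => - 2^-1 | 4, 2 => - 2^-1 | 4, 3 => 1
  | _, _ => 0 end.
Definition Cmat (R : realType) : 'M[R]_5 := \matrix_(i, j) Cf R i j.

Lemma rf (R : realType) : row_free (Bmat R).
Proof.
rewrite row_free_unit.
have h : Cmat R *m Bmat R = 1%:M.
  apply/matrixP => i j; rewrite !mxE !big_ord_recl !big_ord0 ?L4 ?L3 ?L2 ?L1 ?L0.
  rewrite /Cmat /Bmat !mxE.
  case: i => [[|[|[|[|[|?]]]]] Hi] //; case: j => [[|[|[|[|[|?]]]]] Hj] //=;
  rewrite /Cf /Bf /=; field; by [].
by case: (mulmx1_unit h).
Qed.


Theorem proposition8p1 (R : realType) :
  exists S : 'M[R]_5, is_inner_product S /\ exists B : 'M[R]_5, geodesic_basis S B.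
Proof.
exists (Smat R); split.
  split; last exact: pd.
  apply/matrixP => i j; rewrite !mxE /Sf eq_sym.
  by case: eqP => // ->.
exists (Bmat R); split; [exact: rf | exact: geo].
Qed.
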